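(* For every $\rho\in\mathcal{S}(\mathbb{C}^2)$ one has $D_z^2\big(\rho,\tfrac12(I+\sigma_z)\big)=2-2(\mathbf{b}_\rho)_3$.
   Context: Let $\mathcal{H}=\mathbb{C}^2$, $\mathcal{H}^*$ its dual space, and $\mathcal{S}(\mathcal{H})$ the set of density operators on $\mathcal{H}$. For a linear operator $A$ on $\mathcal{H}$, its transpose $A^T$ is the operator on $\mathcal{H}^*$ defined by $(A^T\varphi)(x)=\varphi(Ax)$. $\mathcal{C}(\rho,\omega)=\{\Pi\in\mathcal{S}(\mathcal{H}\otimes\mathcal{H}^* ):\ \mathrm{tr}_{\mathcal{H}^*}[\Pi]=\omega,\ \mathrm{tr}_{\mathcal{H}}[\Pi]=\rho^T\}$. The Pauli matrices are $\sigma_1=\begin{bmatrix}0&1\\1&0\end{bmatrix}$, $\sigma_2=\begin{bmatrix}0&-i\\i&0\end{bmatrix}$, $\sigma_3=\sigma_z=\begin{bmatrix}1&0\\0&-1\end{bmatrix}$. $C_z=(\sigma_z\otimes I^T-I\otimes\sigma_z^T)^2$ and $D_z^2(\rho,\omega)=\inf\{\mathrm{tr}[\Pi C_z]:\Pi\in\mathcal{C}(\rho,\omega)\}$. The Bloch vector of $\rho$ is $\mathbf{b}_\rho=(\mathrm{tr}[\sigma_j\rho])_{j=1}^3$. *)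

(* Defs.v *)
From HB Require Import structures.
From mathcomp Require Import all_boot all_order all_algebra.
From mathcomp Require Import classical_sets reals.
From mathcomp.real_closed Require Import complex mxtens.
Set Implicit Arguments. Unset Strict Implicit. Unset Printing Implicit Defensive.
Import Order.TTheory GRing.Theory Num.Theory.
Local Open Scope ring_scope.
Local Open Scope complex_scope.

Section QOT.
Variable R : realType.
Local Notation C := R[i].

Definition adjmx m n (A : 'M[C]_(m, n)) : 'M[C]_(n, m) := map_mx conjc A^T.

Definition psd n (A : 'M[C]_n) : Prop :=
  adjmx A = A /\ forall v : 'cV[C]_n, 0 <= (adjmx v *m A *m v) 0 0.

Definition density n (A : 'M[C]_n) : Prop := psd A /\ \tr A = 1.

(* partial traces on C^m (x) C^n, index (i,j) |-> i*n + j as in tensmx *)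
Definition ptrace2 m n (P : 'M[C]_(m * n)) : 'M[C]_m :=
  \matrix_(a, b) \sum_(j < n) P (mxtens_index (a, j)) (mxtens_index (b, j)).
Definition ptrace1 m n (P : 'M[C]_(m * n)) : 'M[C]_n :=
  \matrix_(a, b) \sum_(k < m) P (mxtens_index (k, a)) (mxtens_index (k, b)).

(* couplings C(rho, omega) in S(H (x) dual H): tr over dual H P = omega, tr_H P = rho^T.
   Operators on H^* are written in the dual basis, so the transpose of an
   operator is the matrix transpose. *)
Definition coupling n (rho omega : 'M[C]_n) (P : 'M[C]_(n * n)) : Prop :=
  density P /\ ptrace2 P = omega /\ ptrace1 P = rho^T.

Definition sigma_z : 'M[C]_2 :=
  \matrix_(a, b) (if a == b then (if a == 0 then 1 else -1) else 0).

Definition Cz : 'M[C]_(2 * 2) :=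
  let A := sigma_z *t (1%:M : 'M[C]_2)^T - (1%:M : 'M[C]_2) *t sigma_z^T in
  A *m A.

Definition Dz2 (rho omega : 'M[C]_2) : R :=
  inf [set x : R | exists P : 'M[C]_(2 * 2),
         coupling rho omega P /\ \tr (P *m Cz) = x%:C].

Definition bloch3 (rho : 'M[C]_2) : C := \tr (sigma_z *m rho).

End QOT.

(* Main.v *)
Require Import Defs.
From HB Require Import structures.
From mathcomp Require Import all_boot all_order all_algebra.
From mathcomp Require Import boolp classical_sets reals ring lra.
From mathcomp.real_closed Require Import complex mxtens.
Import Order.TTheory GRing.Theory Num.Theory.
Local Open Scope ring_scope.
Local Open Scope complex_scope.

Lemma sum_tens (V : nmodType) m n (F : 'I_(m*n) -> V) :
  \sum_k F k = \sum_i \sum_j F (mxtens_index (i, j)).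
Proof.
rewrite (reindex (@mxtens_index m n)) /=; last first.
  by exists (@mxtens_unindex m n) => x _; [apply: mxtens_indexK| apply: mxtens_unindexK].
by rewrite pair_big /=; apply: eq_bigr => -[i j].
Qed.

Lemma CzE (R : realType) (a b c d : 'I_2) :
  Cz R (mxtens_index (a, b)) (mxtens_index (c, d)) =
  if (a == c) && (b == d) then (if a == b then 0 else 4) else 0.
Proof.
rewrite /Cz mxE sum_tens !big_ord_recl !big_ord0 !mxE !mxtens_indexK /=.
move: a b c d; do 4! (case; case=> [|[|//]] ?); rewrite /=. all: try (rewrite ?eqE /=). all: try ring.

Qed.

Notation o0 := (ord0 : 'I_2).
Notation o1 := (@ord_max 1 : 'I_2).
Notation ix a b := (@mxtens_index 2 2 (a, b)).

Lemma trCz (R : realType) (P : 'M[R[i]]_(2*2)) :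
  \tr (P *m Cz R) = 4 * P (ix o0 o1) (ix o0 o1) + 4 * P (ix o1 o0) (ix o1 o0).
Proof.
rewrite /mxtrace sum_tens !big_ord_recl !big_ord0.
rewrite !mxE !sum_tens !big_ord_recl !big_ord0 !CzE /=.
have -> : lift ord0 ord0 = o1 :> 'I_2 by apply: val_inj.
by rewrite /=; ring.
Qed.

Lemma psd_diag {R : realType} {n} (A : 'M[R[i]]_n) i : psd A -> 0 <= A i i.
Proof.
move=> [_ /(_ (delta_mx i 0))].
have -> : adjmx (delta_mx i 0 : 'cV[R[i]]_n) = delta_mx 0 i.
  apply/matrixP => x y; by rewrite !mxE rmorph_nat andbC.
rewrite -colE !mxE (bigD1 i) //= big1 => [|k /negbTE nk]; last by rewrite !mxE nk andbF mul0r.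
by rewrite !mxE !eqxx mul1r addr0.
Qed.

Lemma ge0_real {R : realType} (z : R[i]) : 0 <= z -> exists r : R, z = r%:C.
Proof. by case: z => a b; rewrite lecE /= => /andP[/eqP -> _]; exists a. Qed.

Notation om R := (2^-1 *: (1%:M + sigma_z R)).

Lemma om11 (R : realType) : om R o1 o1 = 0.
Proof. by rewrite !mxE /= subrr mulr0. Qed.

Lemma coupling_val {R : realType} (rho : 'M[R[i]]_2) (P : 'M[R[i]]_(2*2)) :
  coupling rho (om R) P -> \tr (P *m Cz R) = 4 * rho o1 o1.
Proof.
move=> [[Ppsd _] [h2 h1]].
have e2 := congr1 (fun M : 'M[R[i]]_2 => M o1 o1) h2; have e1 := congr1 (fun M : 'M[R[i]]_2 => M o1 o1) h1.
move: e2 e1; rewrite om11 !mxE !big_ord_recl !big_ord0 /=.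
have -> : lift ord0 ord0 = o1 :> 'I_2 by apply: val_inj.
rewrite !addr0 => /eqP; rewrite paddr_eq0 ?psd_diag // => /andP[/eqP p2 /eqP p3].
rewrite p3 addr0 => <-; rewrite trCz p2; ring.
Qed.

Lemma coupling_ex {R : realType} (rho : 'M[R[i]]_2) : density rho ->
  coupling rho (om R) ((delta_mx o0 o0 : 'M[R[i]]_2) *t rho^T).
Proof.
move=> [[herm pos] tr1].
have hE : forall a b, conjc (rho a b) = rho b a.
  by move=> a b; have := congr1 (fun M : 'M[R[i]]_2 => M b a) herm; rewrite !mxE.
split; first split; first split.
- apply/matrixP => i j; 
  rewrite -(@mxtens_unindexK 2 2 i) -(@mxtens_unindexK 2 2 j).
  case: (mxtens_unindex i) => a b; case: (mxtens_unindex j) => c d.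
  by rewrite /adjmx !mxE !mxtens_indexK /= rmorphM rmorph_nat -(hE b d) andbC.
- move=> v; have := pos (\col_k conjc (v (ix o0 k) 0)).
  do 3! (rewrite ?sum_tens; rewrite ?big_ord_recl ?big_ord0; rewrite ?mxE).
  rewrite !mxtens_indexK /= !conjcK => H; apply: le_trans H _; rewrite le_eqVlt; apply/orP; left; apply/eqP; ring.
- rewrite -tr1 /mxtrace sum_tens !big_ord_recl !big_ord0 !tensmxE !mxE /=; ring.
have two : (2 : R[i]) != 0 by rewrite pnatr_eq0.
have t : rho o0 o0 + rho o1 o1 = 1.
  rewrite -tr1 /mxtrace !big_ord_recl big_ord0 addr0 /=.
  by have -> : lift ord0 ord0 = o1 :> 'I_2 by apply: val_inj.
split; apply/matrixP => x y; rewrite !mxE !big_ord_recl !big_ord0 !tensmxE !mxE;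
  move: x y; do 2! (case; case=> [|[|//]] ?); rewrite /=.
1: rewrite (_ : (1:R[i]) + 1 = 2) // mulVf //.
1: have -> : lift ord0 ord0 = o1 :> 'I_2 by apply: val_inj.
1: by rewrite !mul1r addr0 t.
all: ring.
Qed.

Theorem mainTheorem5 (R : realType) (rho : 'M[R[i]]_2) :
  density rho ->
  (Dz2 rho (2^-1 *: (1%:M + sigma_z R)))%:C = 2 - 2 * bloch3 rho.
Proof.
move=> hd; have [r hr] := ge0_real _ (psd_diag rho o1 hd.1).
have rC : (4 * r)%:C = 4 * rho o1 o1 :> R[i].
  by rewrite hr rmorphM /= rmorph_nat.
have -> : Dz2 rho (om R) = 4 * r.
  rewrite /Dz2 -[RHS]inf1; congr inf.
  rewrite predeqE => x; split.
  - move=> [P [cP trP]]; apply: complexI; rewrite -trP rC.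
    exact: coupling_val.
  - move=> ->; exists ((delta_mx o0 o0 : 'M[R[i]]_2) *t rho^T); split.
      exact: coupling_ex.
    by rewrite rC (coupling_val rho) //; apply: coupling_ex.
have t : rho o0 o0 + rho o1 o1 = 1.
  rewrite -hd.2 /mxtrace !big_ord_recl big_ord0 addr0 /=.
  by have -> : lift ord0 ord0 = o1 :> 'I_2 by apply: val_inj.
rewrite rC /bloch3 /mxtrace !big_ord_recl !big_ord0 !mxE !big_ord_recl !big_ord0 !mxE /=.
have -> : lift ord0 ord0 = o1 :> 'I_2 by apply: val_inj.
have -> : rho o0 o0 = 1 - rho o1 o1 by rewrite -t addrK.
ring.
Qed.
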